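(* Every normal hyperimaginary is equivalent ($\sim$) to a sequence of finitary hyperimaginaries.
   Context: $\mathfrak{C}$ is a monster model of a complete first-order theory $T$. A hyperimaginary is an equivalence class $e=a_E$ of a possibly infinite small tuple $a$ under a $0$-type-definable (type-definable without parameters) equivalence relation $E$; automorphisms act by $f(a_E)=f(a)_E$; a small sequence of hyperimaginaries is regarded as a hyperimaginary, fixed by $f$ iff each entry is. $\mathrm{Fix}(e)=\{f\in\mathrm{Aut}(\mathfrak{C}): f(e)=e\}$; $e$ is normal if $\mathrm{Fix}(e)$ is a normal subgroup of $\mathrm{Aut}(\mathfrak{C})$. $\mathrm{dcl}(e)$ is the class of hyperimaginaries fixed by every $f\in\mathrm{Fix}(e)$; $e\sim d$ means $\mathrm{dcl}(e)=\mathrm{dcl}(d)$. A hyperimaginary $e$ is finitary if $e\sim b_F$ for some finite tuple $b$ and some $0$-type-definable equivalence relation $F$ (equivalently, $e\in\mathrm{dcl}(A)$ for some finite set $A$ of real elements). *)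

(* Defs.v *)
From Stdlib Require Import List.
From Stdlib Require Vectors.Fin.
Set Implicit Arguments.

Record language := {
  Fsym : Type; Fari : Fsym -> nat;     (* function symbols (arity 0 = constants) *)
  Rsym : Type; Rari : Rsym -> nat
}.

Section Syntax.
Variable L : language.

(* Terms with free variables in V and bound (de Bruijn) variables in nat. *)
Inductive term (V : Type) : Type :=
| tfree : V -> term V
| tbound : nat -> term V
| tapp : forall f : Fsym L, (Fin.t (Fari L f) -> term V) -> term V.

Inductive formula (V : Type) : Type :=
| feq : term V -> term V -> formula V
| frel : forall r : Rsym L, (Fin.t (Rari L r) -> term V) -> formula V
| fneg : formula V -> formula V
| fand : formula V -> formula V -> formula V
| fex : formula V -> formula V.   (* binds de Bruijn index 0 *)
End Syntax.

Arguments tfree {L V}. Arguments tbound {L V}. Arguments tapp {L V}.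
Arguments feq {L V}. Arguments frel {L V}. Arguments fneg {L V}.
Arguments fand {L V}. Arguments fex {L V}.

Record structure (L : language) := {
  carrier :> Type;
  carrier_inh : inhabited carrier;
  sfun : forall f : Fsym L, (Fin.t (Fari L f) -> carrier) -> carrier;
  srel : forall r : Rsym L, (Fin.t (Rari L r) -> carrier) -> Prop
}.

Section Semantics.
Variables (L : language) (M : structure L).

Definition scons (m : M) (env : nat -> M) : nat -> M :=
  fun n => match n with O => m | S k => env k end.

Fixpoint teval (V : Type) (s : V -> M) (env : nat -> M) (t : term L V) : M :=
  match t with
  | tfree v => s v
  | tbound n => env n
  | tapp f args => sfun M f (fun i => teval s env (args i))
  end.

Fixpoint sat (V : Type) (s : V -> M) (env : nat -> M) (phi : formula L V) : Prop :=
  match phi with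
  | feq t u => teval s env t = teval s env u
  | frel r args => srel M r (fun i => teval s env (args i))
  | fneg p => ~ sat s env p
  | fand p q => sat s env p /\ sat s env q
  | fex p => exists m : M, sat s (scons m env) p
  end.

(* Truth of a formula under an assignment of its free variables
   (dangling de Bruijn indices, if any, are universally closed). *)
Definition holds (V : Type) (s : V -> M) (phi : formula L V) : Prop :=
  forall env, sat s env phi.

Definition is_aut (g : M -> M) : Prop :=
  (forall x y, g x = g y -> x = y) /\ (forall y, exists x, g x = y) /\
  (forall f args, g (sfun M f args) = sfun M f (fun i => g (args i))) /\
  (forall r args, srel M r args <-> srel M r (fun i => g (args i))).

(* ---------- Smallness relative to a cardinal kappa = |K| ---------- *)
Definition small (K X : Type) : Prop :=
  ~ exists h : K -> X, forall x y, h x = h y -> x = y.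

Definition fin_sat (A : Type) (a : A -> M) (Sigma : formula L (A + unit) -> Prop) :=
  forall l : list (formula L (A + unit)), (forall p, In p l -> Sigma p) ->
    exists m : M, forall p, In p l -> holds (fun v => match v with inl x => a x | inr _ => m end) p.

(* M is a monster model: kappa = |K| is a regular cardinal > |L| + aleph_0,
   M is kappa-saturated and strongly kappa-homogeneous. *)
Definition monster (K : Type) : Prop :=
  small K nat /\ small K (Fsym L) /\ small K (Rsym L) /\
  (* regularity of kappa *)
  (forall (J : Type) (X : J -> Type), small K J -> (forall j, small K (X j)) ->
     small K {j : J & X j}) /\
  (forall (A : Type) (a : A -> M) (Sigma : formula L (A + unit) -> Prop),
     small K A -> fin_sat a Sigma ->
     exists m : M, forall p, Sigma p ->
       holds (fun v => match v with inl x => a x | inr _ => m end) p) /\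
  (forall (A : Type) (a b : A -> M), small K A ->
     (forall p : formula L A, holds a p <-> holds b p) ->
     exists g, is_aut g /\ forall x, g (a x) = b x).

Definition tdrel (I : Type) (Sigma : formula L (I + I) -> Prop) (x y : I -> M) : Prop :=
  forall p, Sigma p -> holds (fun v => match v with inl i => x i | inr i => y i end) p.

Definition is_equiv (X : Type) (R : X -> X -> Prop) : Prop :=
  (forall x, R x x) /\ (forall x y, R x y -> R y x) /\
  (forall x y z, R x y -> R y z -> R x z).

Record hyperimaginary (K : Type) := {
  hI : Type;
  hI_small : small K hI;
  hrep : hI -> M;
  hE : formula L (hI + hI) -> Prop;
  hE_equiv : is_equiv (tdrel hE)
}.

Definition Fix (K : Type) (e : hyperimaginary K) (g : M -> M) : Prop :=
  is_aut g /\ tdrel (hE e) (fun i => g (hrep e i)) (hrep e).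

Definition FixSeq (K J : Type) (d : J -> hyperimaginary K) (g : M -> M) : Prop :=
  is_aut g /\ forall j, Fix (d j) g.

(* dcl of (the hyperimaginary with fixing group) P : the class of
   hyperimaginaries fixed by every automorphism in P. *)
Definition in_dcl (K : Type) (P : (M -> M) -> Prop) (c : hyperimaginary K) : Prop :=
  forall g, is_aut g -> P g -> Fix c g.

Definition hsim (K : Type) (P Q : (M -> M) -> Prop) : Prop :=
  forall c : hyperimaginary K, in_dcl P c <-> in_dcl Q c.

Definition normal_h (K : Type) (e : hyperimaginary K) : Prop :=
  forall g h h', Fix e g -> is_aut h -> is_aut h' ->
    (forall x, h (h' x) = x) -> (forall x, h' (h x) = x) ->
    Fix e (fun x => h (g (h' x))).

Definition finitary (K : Type) (e : hyperimaginary K) : Prop :=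
  exists d : hyperimaginary K,
    (exists l : list (hI d), forall i, In i l) /\ hsim K (Fix e) (Fix d).

End Semantics.

(* Main.v *)
Require Import Defs.
From Stdlib Require Import List Lia Arith Classical ClassicalEpsilon FunctionalExtensionality ProofIrrelevance.
Import ListNotations.
Unset Implicit Arguments.

Section Syn.
Variable L : language.

Fixpoint fin_list {A : Type} (n : nat) : (Fin.t n -> A) -> list A :=
  match n with 0 => fun _ => nil | S m => fun g => g Fin.F1 :: @fin_list A m (fun i => g (Fin.FS i)) end.
Arguments fin_list {A} n _.

Lemma fin_list_In {A : Type} n (g : Fin.t n -> A) i : In (g i) (fin_list n g).
Proof.
  induction i; simpl. left; auto. right. apply (IHi (fun j => g (Fin.FS j))).
Qed.

Fixpoint tfv {V} (t : term L V) : list V :=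
  match t with tfree v => [v] | tbound _ => nil
  | tapp f a => concat (fin_list _ (fun i => tfv (a i))) end.
Fixpoint ffv {V} (p : formula L V) : list V :=
  match p with feq t u => tfv t ++ tfv u
  | frel r a => concat (fin_list _ (fun i => tfv (a i)))
  | fneg p => ffv p | fand p q => ffv p ++ ffv q | fex p => ffv p end.

Fixpoint tbm {V} (t : term L V) : nat :=
  match t with tfree v => 0 | tbound n => S n
  | tapp f a => list_max (fin_list _ (fun i => tbm (a i))) end.
Fixpoint fbm {V} (p : formula L V) : nat :=
  match p with feq t u => max (tbm t) (tbm u)
  | frel r a => list_max (fin_list _ (fun i => tbm (a i)))
  | fneg p => fbm p | fand p q => max (fbm p) (fbm q) | fex p => pred (fbm p) end.

Fixpoint tren {V W} (r : V -> W) (t : term L V) : term L W :=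
  match t with tfree v => tfree (r v) | tbound n => tbound n
  | tapp f a => tapp f (fun i => tren r (a i)) end.
Fixpoint fren {V W} (r : V -> W) (p : formula L V) : formula L W :=
  match p with feq t u => feq (tren r t) (tren r u)
  | frel R a => frel R (fun i => tren r (a i))
  | fneg p => fneg (fren r p) | fand p q => fand (fren r p) (fren r q) | fex p => fex (fren r p) end.

Definition eqd {W} (x y : W) : {x = y} + {x <> y} := excluded_middle_informative (x = y).
Fixpoint idx {W} (w : W) (vs : list W) : nat :=
  match vs with nil => 0 | x :: r => if eqd w x then 0 else S (idx w r) end.

Definition sumf {V W X} (s : V -> X) (u : W -> X) : V + W -> X :=
  fun v => match v with inl x => s x | inr w => u w end.

Fixpoint tabs {V W} (d : nat) (vs : list W) (t : term L (V + W)) : term L V :=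
  match t with
  | tfree (inl v) => tfree v
  | tfree (inr w) => tbound (d + idx w vs)
  | tbound n => if n <? d then tbound n else tbound (n + length vs)
  | tapp f a => tapp f (fun i => tabs d vs (a i)) end.
Fixpoint fabs {V W} (d : nat) (vs : list W) (p : formula L (V + W)) : formula L V :=
  match p with feq t u => feq (tabs d vs t) (tabs d vs u)
  | frel R a => frel R (fun i => tabs d vs (a i))
  | fneg p => fneg (fabs d vs p) | fand p q => fand (fabs d vs p) (fabs d vs q)
  | fex p => fex (fabs (S d) vs p) end.

Fixpoint fexn {V} (k : nat) (p : formula L V) : formula L V :=
  match k with 0 => p | S k => fexn k (fex p) end.

Definition exclose {V W} (vs : list W) (p : formula L (V + W)) : formula L V :=
  fexn (length vs) (fabs 0 vs p).
Definition close {V} (p : formula L V) : formula L V := fneg (fexn (fbm p) (fneg p)).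
Definition ftop {V} : formula L V := fex (feq (tbound 0) (tbound 0)).
Fixpoint bigand {V} (l : list (formula L V)) : formula L V :=
  match l with nil => ftop | p :: r => fand p (bigand r) end.
Definition for_ {V} (p q : formula L V) : formula L V := fneg (fand (fneg p) (fneg q)).

Variable M : structure L.
Local Notation sat := (@sat L M _).
Local Notation teval := (@teval L M _).
Local Notation scons := (@scons L M).
Local Notation holds := (@holds L M _).

Fixpoint prepend (ms : list M) (env : nat -> M) : nat -> M :=
  match ms with nil => env | m :: r => scons m (prepend r env) end.

Lemma teval_ren {V W} (r : V -> W) s env t : teval s env (tren r t) = teval (fun v => s (r v)) env t.
Proof. induction t; simpl; auto. f_equal. apply functional_extensionality; auto. Qed.
Lemma sat_ren {V W} (r : V -> W) p : forall s env, sat s env (fren r p) <-> sat (fun v => s (r v)) env p.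
Proof.
  induction p; intros; simpl; try rewrite !teval_ren; try tauto.
  - assert (E : (fun i => teval s env (tren r (t i))) = (fun i => teval (fun v => s (r v)) env (t i))).
    { apply functional_extensionality; intros; apply teval_ren. } rewrite E; tauto.
  - rewrite IHp; tauto.
  - rewrite IHp1, IHp2; tauto.
  - split; intros [m H]; exists m; apply IHp; auto.
Qed.

Lemma in_concat_fin {A} n (g : Fin.t n -> list A) i x : In x (g i) -> In x (concat (fin_list n g)).
Proof. intros; apply in_concat; exists (g i); split; auto; apply fin_list_In. Qed.

Lemma teval_loc {V} t : forall (s1 s2 : V -> M) env, (forall v, In v (tfv t) -> s1 v = s2 v) -> teval s1 env t = teval s2 env t.
Proof.
  induction t; simpl; intros; auto.
  f_equal. apply functional_extensionality; intros i. apply H; intros; apply H0. eapply in_concat_fin; eauto.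
Qed.
Lemma sat_loc {V} p : forall (s1 s2 : V -> M) env, (forall v, In v (ffv p) -> s1 v = s2 v) -> (sat s1 env p <-> sat s2 env p).
Proof.
  induction p; simpl; intros.
  - rewrite (teval_loc t s1 s2), (teval_loc t0 s1 s2); try tauto; intros; apply H; apply in_or_app; auto.
  - assert (E : (fun i => teval s1 env (t i)) = (fun i => teval s2 env (t i))).
    { apply functional_extensionality; intros i; apply teval_loc; intros; apply H; eapply in_concat_fin; eauto. }
    rewrite E; tauto.
  - rewrite (IHp s1 s2); tauto.
  - rewrite (IHp1 s1 s2), (IHp2 s1 s2); try tauto; intros; apply H; apply in_or_app; auto.
  - split; intros [m Hm]; exists m; [rewrite <- (IHp s1 s2) | rewrite (IHp s1 s2)]; eauto.
Qed.

Lemma list_max_in l x : In x l -> x <= list_max l.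
Proof. intros. assert (H0 := proj1 (list_max_le l (list_max l)) (le_n _)). rewrite Forall_forall in H0; auto. Qed.

Lemma teval_bloc {V} t : forall (s : V -> M) e1 e2, (forall k, k < tbm t -> e1 k = e2 k) -> teval s e1 t = teval s e2 t.
Proof.
  induction t; simpl; intros; auto.
  f_equal. apply functional_extensionality; intros i. apply H; intros; apply H0.
  eapply Nat.lt_le_trans; eauto. apply list_max_in. apply (fin_list_In _ (fun i => tbm (t i))).
Qed.
Lemma sat_bloc {V} p : forall (s : V -> M) e1 e2, (forall k, k < fbm p -> e1 k = e2 k) -> (sat s e1 p <-> sat s e2 p).
Proof.
  induction p; simpl; intros.
  - rewrite (teval_bloc t s e1 e2), (teval_bloc t0 s e1 e2); try tauto; intros; apply H; lia.
  - assert (E : (fun i => teval s e1 (t i)) = (fun i => teval s e2 (t i))).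
    { apply functional_extensionality; intros i; apply teval_bloc; intros; apply H.
      eapply Nat.lt_le_trans; eauto. apply list_max_in. apply (fin_list_In _ (fun i => tbm (t i))). }
    rewrite E; tauto.
  - rewrite (IHp s e1 e2); tauto.
  - rewrite (IHp1 s e1 e2), (IHp2 s e1 e2); try tauto; intros; apply H; lia.
  - assert (Hs : forall m, sat s (scons m e1) p <-> sat s (scons m e2) p).
    { intros m; apply IHp; intros [|k] Hk; simpl; auto; apply H; lia. }
    split; intros [m Hm]; exists m; apply Hs; auto.
Qed.

Lemma sat_fexn {V} k : forall (p : formula L V) s env, sat s env (fexn k p) <-> exists ms, length ms = k /\ sat s (prepend ms env) p.
Proof.
  induction k; simpl; intros.
  - split. intros; exists nil; auto. intros [ms [H1 H2]]; destruct ms; simpl in *; auto; discriminate.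
  - rewrite IHk. split.
    + intros [ms [H1 [m H2]]]. exists (m :: ms); simpl; auto.
    + intros [[|m ms] [H1 H2]]; simpl in *; [discriminate|]. exists ms; split; auto. exists m; auto.
Qed.

Lemma prepend_add ms env n : prepend ms env (n + length ms) = env n.
Proof. induction ms; simpl. rewrite Nat.add_0_r; auto. rewrite Nat.add_succ_r; simpl; auto. Qed.
Lemma prepend_lt ms env k d : k < length ms -> prepend ms env k = nth k ms d.
Proof. revert k; induction ms; simpl; intros. lia. destruct k; simpl; auto. apply IHms; lia. Qed.

Lemma nth_idx {W} (w : W) vs d : In w vs -> nth (idx w vs) vs d = w.
Proof. induction vs; simpl; intros. tauto. destruct (eqd w a); simpl; auto. destruct H; [congruence|auto]. Qed.
Lemma idx_lt {W} (w : W) vs : In w vs -> idx w vs < length vs.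
Proof. induction vs; simpl; intros. tauto. destruct (eqd w a); simpl; [lia|]. destruct H; [congruence|]. apply IHvs in H; lia. Qed.

Lemma teval_abs {V W} (vs : list W) t : forall d (s : V -> M) u E env,
  (forall n, n < d -> E n = env n) -> (forall n, d <= n -> E (n + length vs) = env n) ->
  (forall w, In w vs -> E (d + idx w vs) = u w) -> (forall w, In (inr w) (tfv t) -> In w vs) ->
  teval s E (tabs d vs t) = teval (sumf s u) env t.
Proof.
  induction t; simpl; intros.
  - destruct v; simpl; auto.
  - destruct (Nat.ltb_spec n d); simpl; auto.
  - f_equal. apply functional_extensionality; intros i. apply H; auto. intros; apply H3; eapply in_concat_fin; eauto.
Qed.
Lemma sat_abs {V W} (vs : list W) p : forall d (s : V -> M) u E env,
  (forall n, n < d -> E n = env n) -> (forall n, d <= n -> E (n + length vs) = env n) ->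
  (forall w, In w vs -> E (d + idx w vs) = u w) -> (forall w, In (inr w) (ffv p) -> In w vs) ->
  (sat s E (fabs d vs p) <-> sat (sumf s u) env p).
Proof.
  induction p; simpl; intros.
  - rewrite !(@teval_abs V W vs _ d s u E env); auto; try tauto; intros; apply H2; apply in_or_app; auto.
  - assert (Eq : (fun i => teval s E (tabs d vs (t i))) = (fun i => teval (sumf s u) env (t i))).
    { apply functional_extensionality; intros i; apply teval_abs; auto. intros; apply H2; eapply in_concat_fin; eauto. }
    rewrite Eq; tauto.
  - rewrite (IHp d s u E env); auto; tauto.
  - rewrite (IHp1 d s u E env), (IHp2 d s u E env); auto; try tauto; intros; apply H2; apply in_or_app; auto.
  - split; intros [m Hm]; exists m; [rewrite <- (IHp (S d) s u (scons m E) (scons m env)) | rewrite (IHp (S d) s u (scons m E) (scons m env))]; auto;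
    try (intros [|n] Hn; simpl; auto; apply H; lia);
    try (intros [|n] Hn; simpl; [lia|]; apply H0; lia).
Qed.

Definition rights {V W} (l : list (V + W)) : list W :=
  flat_map (fun v => match v with inl _ => nil | inr w => [w] end) l.
Lemma rights_in {V W} (l : list (V + W)) w : In (inr w) l -> In w (rights l).
Proof. intros; apply in_flat_map; exists (inr w); simpl; auto. Qed.

Lemma sat_exclose {V W} (vs : list W) (p : formula L (V + W)) s env :
  (forall w, In (inr w) (ffv p) -> In w vs) ->
  (sat s env (exclose vs p) <-> exists u, sat (sumf s u) env p).
Proof.
  intros Hfv; unfold exclose; rewrite sat_fexn; split.
  - intros [ms [Hl H]]. exists (fun w => prepend ms env (idx w vs)).
    rewrite <- (sat_abs vs p 0 s _ (prepend ms env) env); auto.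
    intros; lia. intros; rewrite <- Hl; apply prepend_add.
  - intros [u H]. exists (map u vs); split. apply length_map.
    rewrite (sat_abs vs p 0 s u (prepend (map u vs) env) env); auto.
    intros; lia. intros n _. rewrite <- (length_map u vs). apply prepend_add.
    intros w Hw; simpl. assert (Hlt := idx_lt w vs Hw).
    rewrite (prepend_lt _ _ _ (u w)) by (rewrite length_map; auto).
    rewrite map_nth. rewrite nth_idx; auto.
Qed.

Definition closed {V} (p : formula L V) := forall (s : V -> M) e1 e2, sat s e1 p <-> sat s e2 p.

Lemma sat_close {V} (p : formula L V) s env : sat s env (close p) <-> holds s p.
Proof.
  unfold close, holds; simpl; rewrite sat_fexn; split.
  - intros H e. apply NNPP; intros Hn; apply H. exists (map e (seq 0 (fbm p))); split.
    rewrite length_map, length_seq; auto. simpl. intro Hs; apply Hn.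
    rewrite (sat_bloc p s e (prepend (map e (seq 0 (fbm p))) env)); auto.
    intros k Hk. rewrite (prepend_lt _ _ _ (e 0)) by (rewrite length_map, length_seq; auto).
    rewrite (map_nth e (seq 0 (fbm p)) 0). rewrite seq_nth; auto.
  - intros H [ms [_ Hs]]; apply Hs; apply H.
Qed.

Lemma close_closed {V} (p : formula L V) : closed (close p).
Proof. intros s e1 e2; rewrite !sat_close; tauto. Qed.
Lemma closed_holds {V} (p : formula L V) s env : closed p -> (holds s p <-> sat s env p).
Proof. intros Hc; split; intros H; [apply H| intros e; apply (Hc s env e); auto]. Qed.
Lemma closed_ren {V W} (r : V -> W) p : closed p -> closed (fren r p).
Proof. intros Hc s e1 e2; rewrite !sat_ren; apply Hc. Qed.

Lemma sat_top {V} (s : V -> M) env : sat s env ftop.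
Proof. destruct (carrier_inh M) as [m]; simpl; exists m; auto. Qed.
Lemma sat_bigand {V} (l : list (formula L V)) s env : sat s env (bigand l) <-> forall p, In p l -> sat s env p.
Proof.
  induction l; simpl. split; intros; [tauto| apply (sat_top s env)].
  rewrite IHl; split. intros [H1 H2] p [<-|H]; auto. intros H; split; auto.
Qed.
Lemma sat_for {V} (p q : formula L V) s env : sat s env (for_ p q) <-> sat s env p \/ sat s env q.
Proof. simpl; tauto. Qed.

End Syn.
Unset Implicit Arguments.

Section BW.
Variables (X : Type) (le : X -> X -> Prop) (f : X -> X) (sup : (X -> Prop) -> X).
Definition chain (C : X -> Prop) := forall x y, C x -> C y -> le x y \/ le y x.
Hypothesis le_refl : forall x, le x x.
Hypothesis le_trans : forall x y z, le x y -> le y z -> le x z.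
Hypothesis le_anti : forall x y, le x y -> le y x -> x = y.
Hypothesis f_infl : forall x, le x (f x).
Hypothesis sup_ub : forall C c, chain C -> C c -> le c (sup C).
Hypothesis sup_lub : forall C u, chain C -> (forall c, C c -> le c u) -> le (sup C) u.

Inductive T : X -> Prop :=
| Tf : forall x, T x -> T (f x)
| Ts : forall C, chain C -> (forall c, C c -> T c) -> T (sup C).

Definition ext x := forall y, T y -> le y x -> y = x \/ le (f y) x.

Lemma ext_cmp x : ext x -> forall y, T y -> le y x \/ le (f x) y.
Proof.
  intros Hx y Ty; induction Ty as [y0 Ty0 IH|C HC HT IH].
  - destruct IH as [H|H].
    + destruct (Hx y0 Ty0 H) as [->|H2]. right; apply le_refl. left; auto.
    + right; eapply le_trans; eauto.
  - destruct (classic (exists c, C c /\ le (f x) c)) as [[c [Cc Hc]]|Hn].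
    + right; eapply le_trans; eauto.
    + left; apply sup_lub; auto; intros c Cc. destruct (IH c Cc); auto. exfalso; eauto.
Qed.

Lemma all_ext x : T x -> ext x.
Proof.
  intros Tx; induction Tx as [x0 Tx0 IH|C HC HT IH]; intros y Ty Hy.
  - destruct (ext_cmp x0 IH y Ty) as [H|H].
    + destruct (IH y Ty H) as [->|H2]. right; apply le_refl. right; eapply le_trans; eauto.
    + left; apply le_anti; auto.
  - destruct (classic (exists c, C c /\ le y c)) as [[c [Cc Hc]]|Hn].
    + destruct (IH c Cc y Ty Hc) as [->|H2].
      * destruct (ext_cmp c (IH c Cc) (sup C) (Ts C HC HT)) as [H|H].
        -- left; apply le_anti; auto.
        -- right; auto.
      * right; eapply le_trans; eauto.
    + left; apply le_anti; auto. apply sup_lub; auto. intros c Cc.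
      destruct (ext_cmp c (IH c Cc) y Ty) as [H|H]. exfalso; eauto.
      eapply le_trans; eauto.
Qed.

Lemma T_chain : chain T.
Proof.
  intros x y Tx Ty. destruct (ext_cmp x (all_ext x Tx) y Ty); [right; auto| left; eapply le_trans; eauto].
Qed.

Theorem BW_fix : exists x, T x /\ le (f x) x.
Proof.
  exists (sup T); split. apply Ts; auto. apply T_chain.
  apply sup_ub. apply T_chain. apply Tf, Ts; auto. apply T_chain.
Qed.
End BW.

Section Aut.
Variables (L : language) (M : structure L).
Local Notation sat := (@sat L M _).
Local Notation teval := (@teval L M _).
Local Notation scons := (@scons L M).
Local Notation holds := (@holds L M _).
Local Notation is_aut := (@is_aut L M).

Lemma teval_aut {V} g (s : V -> M) env t : is_aut g -> teval (fun v => g (s v)) (fun n => g (env n)) t = g (teval s env t).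
Proof.
  intros Hg; induction t; simpl; auto. destruct Hg as [_ [_ [Hf _]]]. rewrite Hf. f_equal.
  apply functional_extensionality; auto.
Qed.

Lemma sat_aut {V} g p : is_aut g -> forall (s : V -> M) env, sat (fun v => g (s v)) (fun n => g (env n)) p <-> sat s env p.
Proof.
  intros Hg; induction p; intros; simpl.
  - rewrite !teval_aut; auto. destruct Hg as [Hi _]; split; auto; intros; congruence.
  - pose proof Hg as [_ [_ [_ Hr]]]. rewrite (Hr r (fun i => teval s env (t i))).
    assert (E : (fun i => teval (fun v => g (s v)) (fun n => g (env n)) (t i)) = (fun i => g (teval s env (t i)))).
    { apply functional_extensionality; intros; apply teval_aut; auto. }
    rewrite E; tauto.
  - rewrite IHp; tauto.
  - rewrite IHp1, IHp2; tauto.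
  - split.
    + intros [m Hm]. destruct Hg as [Hi [Hs _]]. destruct (Hs m) as [m' <-]. exists m'.
      rewrite <- IHp. assert (E : (fun n => g (scons m' env n)) = scons (g m') (fun n => g (env n))).
      { apply functional_extensionality; intros [|n]; auto. } rewrite E; auto.
    + intros [m Hm]. exists (g m). rewrite <- IHp in Hm.
      assert (E : (fun n => g (scons m env n)) = scons (g m) (fun n => g (env n))).
      { apply functional_extensionality; intros [|n]; auto. } rewrite E in Hm; auto.
Qed.

Lemma aut_inv g : is_aut g -> exists g', is_aut g' /\ (forall x, g (g' x) = x) /\ (forall x, g' (g x) = x).
Proof.
  intros Hg. pose proof Hg as [Hi [Hs [Hf Hr]]].
  exists (fun y => proj1_sig (constructive_indefinite_description _ (Hs y))).
  set (g' := fun y => proj1_sig (constructive_indefinite_description _ (Hs y))).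
  assert (H1 : forall x, g (g' x) = x). { intros; unfold g'; destruct constructive_indefinite_description; auto. }
  assert (H2 : forall x, g' (g x) = x). { intros; apply Hi; auto. }
  split; [|split; auto]. split; [|split; [|split]].
  - intros x y E. rewrite <- (H1 x), <- (H1 y), E; auto.
  - intros y; exists (g y); auto.
  - intros f args. apply Hi. rewrite H1, Hf. f_equal; apply functional_extensionality; intros; rewrite H1; auto.
  - intros r args. rewrite (Hr r (fun i => g' (args i))).
    assert (E : (fun i => g (g' (args i))) = args). { apply functional_extensionality; auto. } rewrite E; tauto.
Qed.

Lemma holds_aut {V} g (p : formula L V) s : is_aut g -> (holds (fun v => g (s v)) p <-> holds s p).
Proof.
  intros Hg. destruct (aut_inv g Hg) as [g' [Hg' [H1 H2]]]. split; intros H env.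
  - rewrite <- (sat_aut g p Hg). apply H.
  - assert (E : env = (fun n => g (g' (env n)))). { apply functional_extensionality; auto. }
    rewrite E. rewrite (sat_aut g p Hg). apply H.
Qed.

Lemma aut_id : is_aut (fun x => x).
Proof. split; [|split; [|split]]; auto. intros y; exists y; auto. tauto. Qed.

Lemma aut_comp g h : is_aut g -> is_aut h -> is_aut (fun x => g (h x)).
Proof.
  intros [Gi [Gs [Gf Gr]]] [Hi [Hs [Hf Hr]]]. split; [|split; [|split]].
  - auto.
  - intros y. destruct (Gs y) as [y1 <-]. destruct (Hs y1) as [y2 <-]. eauto.
  - intros; rewrite Hf, Gf; auto.
  - intros r args. rewrite (Hr r args), (Gr r); tauto.
Qed.

Lemma holds_ext {V} (s1 s2 : V -> M) p : (forall v, s1 v = s2 v) -> holds s1 p -> holds s2 p.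
Proof. intros E; replace s2 with s1; auto. apply functional_extensionality; auto. Qed.
End Aut.
Unset Implicit Arguments.

Section Small.
Variable K : Type.
Lemma small_inj (X Y : Type) (h : Y -> X) : (forall x y, h x = h y -> x = y) -> small K X -> small K Y.
Proof. intros Hh HX [k Hk]. apply HX. exists (fun x => h (k x)). auto. Qed.
End Small.

Section TupSat.
Variables (L : language) (M : structure L) (K : Type).
Local Notation sat := (@sat L M _).
Local Notation holds := (@holds L M _).
Hypothesis HM : monster M K.

Lemma small_sum A B : small K A -> small K B -> small K (A + B).
Proof.
  intros HA HB. destruct HM as [Hn [_ [_ [Hreg _]]]].
  assert (Hb : small K bool). { apply (small_inj K nat bool (fun b : bool => if b then 1 else 0)); auto.
    intros [] []; simpl; auto; discriminate. }
  set (X := fun b : bool => if b then A else B).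
  apply (small_inj K {b : bool & X b} (A + B) (fun v => match v with inl x => existT X true x | inr y => existT X false y end)).
  - intros [x|x] [y|y] E; try (inversion E; fail).
    + apply (f_equal (fun p : {b : bool & X b} => match p with existT _ true x => Some x | _ => None end)) in E. congruence.
    + apply (f_equal (fun p : {b : bool & X b} => match p with existT _ false x => Some x | _ => None end)) in E. congruence.
  - apply Hreg; auto. intros []; simpl; auto.
Qed.

Variables (A I : Type) (HA : small K A) (HI : small K I) (a : A -> M).
Variable Sig : formula L (A + I) -> Prop.
Hypothesis Hcl : forall p, Sig p -> closed L M p.
Hypothesis Hfs : forall l, (forall p, In p l -> Sig p) -> exists z : I -> M, forall p, In p l -> holds (sumf a z) p.

Definition good (z : I -> option M) := forall l, (forall p, In p l -> Sig p) ->
  exists z' : I -> M, (forall i m, z i = Some m -> z' i = m) /\ forall p, In p l -> holds (sumf a z') p.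
Definition ple (z1 z2 : I -> option M) := forall i m, z1 i = Some m -> z2 i = Some m.

Definition psup (C : (I -> option M) -> Prop) : I -> option M := fun i =>
  match excluded_middle_informative (exists m c, C c /\ c i = Some m) with
  | left H => Some (proj1_sig (constructive_indefinite_description _ H))
  | right _ => None end.

Lemma psup_inv C i m : psup C i = Some m -> exists c, C c /\ c i = Some m.
Proof.
  unfold psup; destruct excluded_middle_informative as [H|H]; [|discriminate].
  destruct constructive_indefinite_description as [m' Hm']; simpl; intros E; inversion E; subst; auto.
Qed.
Lemma psup_ub C c : chain _ ple C -> C c -> ple c (psup C).
Proof.
  intros HC Cc i m E. destruct (psup C i) as [o|] eqn:Es.
  - destruct (psup_inv C i o Es) as [c' [Cc' E']]. destruct (HC c c' Cc Cc') as [H|H].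
    + apply H in E; congruence. + apply H in E'; congruence.
  - unfold psup in Es. destruct excluded_middle_informative as [H|H]; [discriminate|]. exfalso; eauto.
Qed.
Lemma psup_lub C u : (forall c, C c -> ple c u) -> ple (psup C) u.
Proof. intros H i m E. destruct (psup_inv C i m E) as [c [Cc E']]. eapply H; eauto. Qed.

Lemma good_bot : good (fun _ => None).
Proof. intros l Hl. destruct (Hfs l Hl) as [z Hz]. exists z; split; auto; discriminate. Qed.

Definition Ivars (l : list (formula L (A + I))) : list I := flat_map (fun p => rights (ffv L p)) l.

Lemma psup_good C : chain _ ple C -> (forall c, C c -> good c) -> good (psup C).
Proof.
  intros HC HG l Hl.
  assert (Hfind : forall vs, exists c0, good c0 /\ (c0 = (fun _ => None) \/ C c0) /\
     forall j m, In j vs -> psup C j = Some m -> c0 j = Some m).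
  { induction vs as [|j vs IH].
    - exists (fun _ => None); split; [apply good_bot|split; auto]. intros; simpl in *; tauto.
    - destruct IH as [c0 [G0 [B0 H0]]]. destruct (psup C j) as [m|] eqn:Ej.
      + destruct (psup_inv C j m Ej) as [c1 [Cc1 E1]].
        assert (Hc : ple c0 c1 \/ ple c1 c0). { destruct B0 as [->|B0]. left; intros i m' E; discriminate. apply HC; auto. }
        destruct Hc as [Hc|Hc].
        * exists c1; split; auto; split; auto. intros j' m' [<-|Hj] E'. congruence. apply Hc; eauto.
        * exists c0; split; auto; split; auto. intros j' m' [<-|Hj] E'. rewrite Ej in E'; inversion E'; subst; auto. eauto.
      + exists c0; split; auto; split; auto. intros j' m' [<-|Hj] E'. congruence. eauto. }
  destruct (Hfind (Ivars l)) as [c0 [G0 [_ H0]]]. destruct (G0 l Hl) as [z' [Hz1 Hz2]].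
  exists (fun j => match psup C j with Some m => m | None => z' j end). split.
  - intros i m E; rewrite E; auto.
  - intros p Hp. generalize (Hz2 p Hp). intros Hh env. rewrite (sat_loc L M p _ (sumf a z') env). apply Hh.
    intros [x|j] Hv; simpl; auto. destruct (psup C j) eqn:E; auto. symmetry; apply Hz1; apply H0; auto.
    apply in_flat_map; exists p; split; auto. apply rights_in; auto.
Qed.

Definition upd (z : I -> option M) i m : I -> option M := fun j => if eqd j i then Some m else z j.

Lemma extend z i : good z -> z i = None -> exists m, good (upd z i m).
Proof.
  intros Gz Ezi. destruct (carrier_inh M) as [m0].
  set (a' := sumf a (fun j => match z j with Some m => m | None => m0 end)).
  set (rho := fun v : A + I => match v with inl al => (inl (inl (inl al)) : ((A + I) + unit) + I)
     | inr j => match z j with Some _ => inl (inl (inr j)) | None => if eqd j i then inl (inr tt) else inr j end end).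
  set (psi := fun l : list (formula L (A + I)) => exclose L (rights (ffv L (fren L rho (bigand L l)))) (fren L rho (bigand L l))).
  set (Pi := fun p => exists l, (forall q, In q l -> Sig q) /\ p = psi l).
  destruct HM as [_ [_ [_ [_ [Hsat _]]]]].
  destruct (Hsat (A + I)%type a' Pi) as [m Hm].
  - apply small_sum; auto.
  - intros lp Hlp.
    assert (Hc : exists Lg, (forall q, In q Lg -> Sig q) /\ forall p, In p lp -> exists l, (forall q, In q l -> In q Lg) /\ p = psi l).
    { induction lp as [|p lp IH].
      - exists nil; split; simpl; tauto.
      - destruct IH as [Lg [H1 H2]]. intros; apply Hlp; simpl; auto.
        destruct (Hlp p (or_introl eq_refl)) as [l [Hl ->]].
        exists (l ++ Lg); split. intros q Hq; apply in_app_or in Hq; destruct Hq; auto.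
        intros p' [<-|Hp']. exists l; split; auto; intros; apply in_or_app; auto.
        destruct (H2 p' Hp') as [l' [Hl' ->]]. exists l'; split; auto; intros; apply in_or_app; auto. }
    destruct Hc as [Lg [HLg Hlg]]. destruct (Gz Lg HLg) as [z' [Hz1 Hz2]].
    exists (z' i). intros p Hp. destruct (Hlg p Hp) as [l [Hl ->]]. intros env. unfold psi.
    rewrite sat_exclose by (intros; apply rights_in; auto). exists z'.
    rewrite sat_ren. rewrite sat_bigand. intros q Hq.
    assert (E : (fun v => sumf (fun v0 : (A + I) + unit => match v0 with inl x => a' x | inr _ => z' i end) z' (rho v)) = sumf a z').
    { apply functional_extensionality; intros [x|j]; unfold rho, sumf; simpl. reflexivity.
      destruct (z j) eqn:Ej. unfold a', sumf. rewrite Ej. symmetry; apply Hz1; auto. destruct (eqd j i); subst; reflexivity. }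
    rewrite E. apply Hz2; auto.
  - exists m. intros l Hl. assert (HP : Pi (psi l)) by (exists l; auto).
    generalize (Hm _ HP (fun _ => m)). unfold psi. rewrite sat_exclose by (intros; apply rights_in; auto).
    intros [u Hu]. rewrite sat_ren in Hu. rewrite sat_bigand in Hu.
    set (X := fun v => sumf (fun v0 : (A + I) + unit => match v0 with inl x => a' x | inr _ => m end) u (rho v)) in Hu.
    exists (fun j => X (inr j)). split.
    + intros j m1. unfold upd, X; simpl. destruct (eqd j i).
      * subst; rewrite Ezi; simpl. destruct (eqd i i); [|congruence]. simpl; congruence.
      * destruct (z j) eqn:Ej; simpl. unfold a'; simpl; rewrite Ej; congruence. destruct (eqd j i); [congruence|]. discriminate.
    + intros q Hq. apply (closed_holds L M q _ (fun _ => m) (Hcl q (Hl q Hq))).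
      assert (E : X = sumf a (fun j => X (inr j))). { apply functional_extensionality; intros [x|j]; auto. }
      rewrite <- E. apply Hu; auto.
Qed.

Theorem tuple_sat : exists z : I -> M, forall p, Sig p -> holds (sumf a z) p.
Proof.
  set (f := fun z : I -> option M => match excluded_middle_informative (exists z', good z' /\ ple z z' /\ exists i, z i = None /\ z' i <> None) with
    | left H => proj1_sig (constructive_indefinite_description _ H) | right _ => z end).
  assert (Hf : forall z, ple z (f z) /\ (good z -> good (f z))).
  { intros z; unfold f; destruct excluded_middle_informative as [H|H].
    - pose proof (proj2_sig (constructive_indefinite_description _ H)) as [G [P _]]. split; auto.
    - split; auto. intros i m; auto. }
  destruct (BW_fix (I -> option M) ple f psup) as [s [Ts Hs]].
  - intros x i m; auto.
  - intros x y z H1 H2 i m E; auto.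
  - intros x y H1 H2. apply functional_extensionality; intros i. destruct (x i) eqn:E1.
    rewrite (H1 _ _ E1); auto. destruct (y i) eqn:E2; auto. rewrite (H2 _ _ E2) in E1; discriminate.
  - intros; apply Hf.
  - intros; apply psup_ub; auto.
  - intros; apply psup_lub; auto.
  - assert (Gs : good s).
    { assert (G : forall x, T _ ple f psup x -> good x).
      { intros x Tx; induction Tx as [x Tx IH|C HC HT IH]. apply Hf; auto. apply psup_good; auto. }
      apply G; auto. }
    assert (Tot : forall i, s i <> None).
    { intros i Ei. destruct (extend s i Gs Ei) as [m Gm].
      assert (Hex : exists z', good z' /\ ple s z' /\ exists i, s i = None /\ z' i <> None).
      { exists (upd s i m); split; auto; split.
        - intros j m' E; unfold upd; destruct (eqd j i); subst; congruence.
        - exists i; split; auto. unfold upd; destruct (eqd i i); congruence. }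
      unfold f in Hs. destruct excluded_middle_informative as [H|H]; [|tauto].
      pose proof (proj2_sig (constructive_indefinite_description _ H)) as [_ [_ [j [Ej Nj]]]].
      destruct (proj1_sig (constructive_indefinite_description _ H) j) eqn:E; [|congruence]. apply Hs in E; congruence. }
    destruct (carrier_inh M) as [m0].
    exists (fun i => match s i with Some m => m | None => m0 end). intros p Hp.
    destruct (Gs [p]) as [z' [Hz1 Hz2]]. intros q [<-|[]]; auto.
    apply (holds_ext L M (sumf a z')). intros [x|i]; simpl; auto. destruct (s i) eqn:E; auto. congruence.
    apply Hz2; simpl; auto.
Qed.
End TupSat.
Unset Implicit Arguments.

Fixpoint enum_lt (n : nat) : list {k | k < n} :=
  match n with 0 => nil
  | S m => exist (fun k => k < S m) m (Nat.lt_succ_diag_r m) ::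
      map (fun x : {k | k < m} => exist (fun k => k < S m) (proj1_sig x) (Nat.lt_lt_succ_r _ _ (proj2_sig x))) (enum_lt m) end.
Lemma enum_lt_all n x : In x (enum_lt n).
Proof.
  induction n; destruct x as [k Hk]. lia. simpl.
  destruct (Nat.eq_dec k n). subst; left; f_equal; apply proof_irrelevance.
  right. assert (Hk' : k < n) by lia. 
  apply in_map_iff. exists (exist _ k Hk'). split; [simpl; f_equal; apply proof_irrelevance | auto].
Qed.

Section Lists.
Variables (K I : Type).
Hypothesis Hreg : forall (J : Type) (X : J -> Type), small K J -> (forall j, small K (X j)) -> small K {j : J & X j}.
Hypothesis Hnat : small K nat.
Hypothesis HI : small K I.
Fixpoint Xn (n : nat) : Type := match n with 0 => unit | S n => {_ : I & Xn n} end.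
Fixpoint to_x (l : list I) : Xn (length l) := match l with nil => tt | i :: r => existT _ i (to_x r) end.
Fixpoint back (n : nat) : Xn n -> list I := match n with 0 => fun _ => nil | S n => fun p => projT1 p :: back n (projT2 p) end.
Lemma back_to l : back (length l) (to_x l) = l.
Proof. induction l; simpl; congruence. Qed.
Lemma small_Xn n : small K (Xn n).
Proof.
  induction n; simpl.
  - apply (small_inj K nat unit (fun _ => 0)); auto. intros [] []; auto.
  - apply Hreg; auto.
Qed.
Lemma small_list : small K (list I).
Proof.
  apply (small_inj K {n : nat & Xn n} (list I) (fun l => existT Xn (length l) (to_x l))).
  - intros x y E. apply (f_equal (fun p => back (projT1 p) (projT2 p))) in E. simpl in E. rewrite !back_to in E; auto.
  - apply Hreg; auto. apply small_Xn.
Qed.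
Lemma small_prod (B : Type) : small K B -> small K (I * B).
Proof.
  intros HB. apply (small_inj K {_ : I & B} (I * B) (fun p => existT _ (fst p) (snd p))).
  - intros [x1 x2] [y1 y2] E. apply (f_equal (fun p : {_ : I & B} => (projT1 p, projT2 p))) in E. simpl in E; auto.
  - apply Hreg; auto.
Qed.
End Lists.

Section Main.
Variables (L : language) (M : structure L) (K : Type).
Local Notation sat := (@sat L M _).
Local Notation holds := (@holds L M _).
Local Notation is_aut := (@is_aut L M).
Hypothesis HM : monster M K.
Variable e : hyperimaginary M K.
Hypothesis Hn : normal_h e.
Local Notation I := (hI e).
Local Notation a := (hrep e).
Local Notation E := (hE e).

Lemma tdrel_ext {J} (Sg : formula L (J + J) -> Prop) x y x' y' : (forall i, x i = x' i) -> (forall i, y i = y' i) ->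
  tdrel M Sg x y -> tdrel M Sg x' y'.
Proof. intros H1 H2 H p Hp. apply (holds_ext L M (sumf x y)). intros [i|i]; simpl; auto. apply H; auto. Qed.

Lemma tdrel_aut {J} (Sg : formula L (J + J) -> Prop) h x y : is_aut h -> tdrel M Sg x y -> tdrel M Sg (fun i => h (x i)) (fun i => h (y i)).
Proof.
  intros Hh H p Hp. apply (holds_ext L M (fun v => h (sumf x y v))). intros [i|i]; simpl; auto.
  apply (holds_aut L M h p (sumf x y) Hh). apply H; auto.
Qed.

Lemma Eeq : is_equiv (tdrel M E). Proof. apply (hE_equiv e). Qed.

Lemma Fix_comp g1 g2 : Fix e g1 -> Fix e g2 -> Fix e (fun u => g1 (g2 u)).
Proof.
  intros [A1 F1] [A2 F2]. split. apply aut_comp; auto.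
  destruct Eeq as [_ [_ Tr]]. eapply Tr; [|apply F1].
  apply (tdrel_aut E g1 _ _ A1 F2).
Qed.

Lemma Fix_inv g g' : Fix e g -> is_aut g' -> (forall x, g' (g x) = x) -> Fix e g'.
Proof.
  intros [A1 F1] A2 H. split; auto. destruct Eeq as [_ [Sy _]]. apply Sy.
  apply (tdrel_ext E (fun i => g' (g (hrep e i))) (fun i => g' (hrep e i))); auto.
  apply tdrel_aut; auto.
Qed.

Section D.
Variables (i0 : I) (t : list I).
Definition Sx := {k | k < length t}.
Definition idxS (k : Sx) : I := nth (proj1_sig k) t i0.
Definition bb (k : Sx) : M := a (idxS k).

Definition RR (x y : Sx -> M) : Prop := (forall k, x k = y k) \/
  exists h g, is_aut h /\ Fix e g /\ forall k, x k = h (g (bb k)) /\ y k = h (bb k).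

Lemma RR_equiv : is_equiv RR.
Proof.
  split; [|split].
  - intros x; left; auto.
  - intros x y [H|[h [g [Ah [Fg H]]]]]. left; intros; symmetry; auto.
    destruct (aut_inv L M g (proj1 Fg)) as [g' [Ag' [G1 G2]]].
    right; exists (fun u => h (g u)), g'; split; [apply aut_comp; auto; apply Fg|split].
    eapply Fix_inv; eauto. intros k; destruct (H k) as [H1 H2]; split; [rewrite G1|]; auto.
  - intros x y z [H|[h1 [g1 [Ah1 [Fg1 H]]]]] [H'|[h2 [g2 [Ah2 [Fg2 H']]]]].
    + left; intros k; rewrite H; auto.
    + right; exists h2, g2; split; auto; split; auto. intros k; rewrite H; auto.
    + right; exists h1, g1; split; auto; split; auto. intros k; rewrite <- H'; auto.
    + right. destruct (aut_inv L M h1 Ah1) as [h1' [Ah1' [P1 Q1]]].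
      destruct (aut_inv L M h2 Ah2) as [h2' [Ah2' [P2 Q2]]].
      exists h2, (fun u => h2' (h1 (g1 (h1' (h2 (g2 u)))))). split; auto; split.
      * apply (Fix_comp (fun u => h2' (h1 (g1 (h1' (h2 u)))))); auto.
        apply (Hn g1 (fun u => h2' (h1 u)) (fun u => h1' (h2 u))); auto.
        apply aut_comp; auto. apply aut_comp; auto.
        intros u; rewrite P1, Q2; auto. intros u; rewrite P2, Q1; auto.
      * intros k. destruct (H k) as [Hx Hy]. destruct (H' k) as [Hy' Hz]. split; auto.
        rewrite P2. rewrite Hx. f_equal. f_equal. rewrite <- Hy'. rewrite Hy. rewrite Q1. auto.
Qed.

Definition Sg (p : formula L (Sx + Sx)) : Prop := forall x y, RR x y -> holds (sumf x y) p.

Definition rW (i : I) : (Sx + Sx) + (I + I) := inr (inl i).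
Definition rZ (i : I) : (Sx + Sx) + (I + I) := inr (inr i).
Definition rE (v : I + I) : (Sx + Sx) + (I + I) := match v with inl i => inr (inl i) | inr i => inr (inr i) end.

Definition qq (p : formula L ((Sx + Sx) + (I + I))) : Prop :=
  (exists psi, holds a psi /\ p = fren L rW (close L psi)) \/
  (exists psi, holds a psi /\ p = fren L rZ (close L psi)) \/
  (exists pe, E pe /\ p = fren L rE (close L pe)) \/
  (exists k, p = feq (tfree (inr (inl (idxS k)))) (tfree (inl (inl k)))) \/
  (exists k, p = feq (tfree (inr (inr (idxS k)))) (tfree (inl (inr k)))).

Lemma qq_closed p : qq p -> closed L M p.
Proof.
  intros [[psi [_ ->]]|[[psi [_ ->]]|[[pe [_ ->]]|[[k ->]|[k ->]]]]];
  try (apply closed_ren; apply close_closed); intros s e1 e2; simpl; tauto.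
Qed.

Lemma holds_ren_close {V W} (r : V -> W) (p : formula L V) (s : W -> M) : holds s (fren L r (close L p)) <-> holds (fun v => s (r v)) p.
Proof.
  split. intros H. destruct (carrier_inh M) as [m]. generalize (H (fun _ => m)). rewrite sat_ren, sat_close; auto.
  intros H env. rewrite sat_ren, sat_close; auto.
Qed.

Lemma q_R x y W Z : (forall p, qq p -> holds (sumf (sumf x y) (sumf W Z)) p) -> RR x y.
Proof.
  intros Hq. destruct (carrier_inh M) as [m0].
  assert (HW : forall psi, holds a psi <-> holds W psi).
  { intros psi; split; intros H.
    - assert (X := Hq (fren L rW (close L psi)) (or_introl (ex_intro _ psi (conj H eq_refl)))).
      apply (proj1 (holds_ren_close rW psi _)) in X. exact X.
    - apply NNPP; intros Hn0.
      assert (Ha : holds a (fneg (close L psi))). { intros env Hc. apply Hn0. apply (sat_close L M psi a env). exact Hc. }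
      assert (X := Hq (fren L rW (close L (fneg (close L psi)))) (or_introl (ex_intro _ _ (conj Ha eq_refl)))).
      apply (proj1 (holds_ren_close rW _ _)) in X. apply (X (fun _ => m0)). apply (sat_close L M psi W). exact H. }
  assert (HZ : forall psi, holds a psi <-> holds Z psi).
  { intros psi; split; intros H.
    - assert (X := Hq (fren L rZ (close L psi)) (or_intror (or_introl (ex_intro _ psi (conj H eq_refl))))).
      apply (proj1 (holds_ren_close rZ psi _)) in X. exact X.
    - apply NNPP; intros Hn0.
      assert (Ha : holds a (fneg (close L psi))). { intros env Hc. apply Hn0. apply (sat_close L M psi a env). exact Hc. }
      assert (X := Hq (fren L rZ (close L (fneg (close L psi)))) (or_intror (or_introl (ex_intro _ _ (conj Ha eq_refl))))).
      apply (proj1 (holds_ren_close rZ _ _)) in X. apply (X (fun _ => m0)). apply (sat_close L M psi Z). exact H. }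
  assert (HE : tdrel M E W Z).
  { intros pe Hpe. assert (X := Hq (fren L rE (close L pe)) (or_intror (or_intror (or_introl (ex_intro _ pe (conj Hpe eq_refl)))))).
    apply (proj1 (holds_ren_close rE pe _)) in X. apply (holds_ext L M (fun v : I + I => sumf (sumf x y) (sumf W Z) (rE v)) _ pe); [|exact X]. intros [i|i]; auto. }
  assert (Hx : forall k, W (idxS k) = x k).
  { intros k. assert (X := Hq _ (or_intror (or_intror (or_intror (or_introl (ex_intro _ k eq_refl)))))). apply (X (fun _ => m0)). }
  assert (Hy : forall k, Z (idxS k) = y k).
  { intros k. assert (X := Hq _ (or_intror (or_intror (or_intror (or_intror (ex_intro _ k eq_refl)))))). apply (X (fun _ => m0)). }
  destruct HM as [_ [_ [_ [_ [_ Hhom]]]]].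
  destruct (Hhom I a Z (hI_small e) HZ) as [k [Ak Hk]].
  destruct (aut_inv L M k Ak) as [k' [Ak' [K1 K2]]].
  destruct (Hhom I a (fun i => k' (W i)) (hI_small e)) as [f [Af Hf]].
  { intros psi. rewrite HW. symmetry. apply (holds_aut L M k' psi W Ak'). }
  right; exists k, f; split; auto; split.
  - split; auto. apply (tdrel_ext E (fun i => k' (W i)) (fun i => k' (Z i))).
    intros; rewrite Hf; auto. intros i; rewrite <- Hk; auto. apply tdrel_aut; auto.
  - intros k0; split. rewrite <- Hx. unfold bb. rewrite Hf, K1; auto. rewrite <- Hy. unfold bb; auto.
Qed.

Lemma R_q x y h g : is_aut h -> Fix e g -> (forall k, x k = h (g (bb k)) /\ y k = h (bb k)) ->
  forall p, qq p -> holds (sumf (sumf x y) (sumf (fun i => h (g (a i))) (fun i => h (a i)))) p.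
Proof.
  intros Ah [Ag Fg] H p [[psi [Hp ->]]|[[psi [Hp ->]]|[[pe [Hp ->]]|[[k ->]|[k ->]]]]].
  - rewrite holds_ren_close. simpl. apply (holds_aut L M (fun u => h (g u)) psi a); auto. apply aut_comp; auto.
  - rewrite holds_ren_close. simpl. apply (holds_aut L M h psi a); auto.
  - rewrite holds_ren_close. apply (holds_ext L M (sumf (fun i => h (g (a i))) (fun i => h (a i)))).
    intros [i|i]; auto. apply (tdrel_aut E h _ _ Ah Fg); auto.
  - intros env; simpl. symmetry; apply H.
  - intros env; simpl. symmetry; apply H.
Qed.

Definition eqS : formula L (Sx + Sx) := bigand L (map (fun k => feq (tfree (inl k)) (tfree (inr k))) (enum_lt (length t))).

Lemma typedef x y : tdrel M Sg x y -> RR x y.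
Proof.
  intros Ht. destruct (carrier_inh M) as [m0].
  destruct (classic (exists z, forall p, qq p -> holds (sumf (sumf x y) z) p)) as [[z Hz]|Hnz].
  - apply (q_R x y (fun i => z (inl i)) (fun i => z (inr i))). intros p Hp.
    apply (holds_ext L M (sumf (sumf x y) z)); auto. intros [v|[i|i]]; auto.
  - assert (Hfs : ~ forall l, (forall p, In p l -> qq p) -> exists z : I + I -> M, forall p, In p l -> holds (sumf (sumf x y) z) p).
    { intros Hfs. apply Hnz. pose proof HM as [Hnat [_ [_ [Hreg _]]]].
      apply (tuple_sat L M K HM (Sx + Sx) (I + I)); auto.
      - apply (small_sum L M K HM); auto; apply (small_inj K nat Sx (fun k => proj1_sig k)); auto;
        intros [k1 H1] [k2 H2]; simpl; intros ->; f_equal; apply proof_irrelevance.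
      - apply (small_sum L M K HM); auto; apply (hI_small e).
      - apply qq_closed. }
    apply not_all_ex_not in Hfs. destruct Hfs as [l Hl]. apply imply_to_and in Hl. destruct Hl as [Hlq Hno].
    set (phi := for_ L eqS (exclose L (rights (ffv L (bigand L l))) (bigand L l))).
    assert (Sphi : Sg phi).
    { intros x' y' [H|[h [g [Ah [Fg H]]]]] env; unfold phi; rewrite sat_for.
      - left. unfold eqS; rewrite sat_bigand. intros p Hp. apply in_map_iff in Hp. destruct Hp as [k [<- _]]. simpl; auto.
      - right. rewrite sat_exclose by (intros; apply rights_in; auto). eexists. rewrite sat_bigand. intros p Hp.
        apply (R_q x' y' h g Ah Fg H p (Hlq p Hp)). }
    generalize (Ht phi Sphi (fun _ => m0)). unfold phi; rewrite sat_for. intros [H|H].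
    + left. intros k. unfold eqS in H; rewrite sat_bigand in H.
      apply (H (feq (tfree (inl k)) (tfree (inr k)))). apply in_map_iff. exists k; split; auto. apply enum_lt_all.
    + rewrite sat_exclose in H by (intros; apply rights_in; auto). destruct H as [u Hu].
      exfalso; apply Hno. exists u. intros p Hp. rewrite sat_bigand in Hu.
      apply (closed_holds L M p _ (fun _ => m0) (qq_closed p (Hlq p Hp))). apply Hu; auto.
Qed.

Lemma tdrel_RR x y : tdrel M Sg x y <-> RR x y.
Proof. split. apply typedef. intros H p Hp; apply Hp; auto. Qed.

Lemma Sg_equiv : is_equiv (tdrel M Sg).
Proof.
  destruct RR_equiv as [R1 [R2 R3]]. split; [|split]; intros; rewrite tdrel_RR in *; eauto.
Qed.

Lemma Sx_small : small K Sx.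
Proof.
  destruct HM as [Hnat _]. apply (small_inj K nat Sx (fun k => proj1_sig k)); auto.
  intros [k1 H1] [k2 H2]; simpl; intros ->; f_equal; apply proof_irrelevance.
Qed.

Definition dd : hyperimaginary M K := @Build_hyperimaginary L M K Sx Sx_small bb Sg Sg_equiv.
End D.

Definition dseq (j : I * list I) : hyperimaginary M K := dd (fst j) (snd j).

Lemma Fix_iff g : is_aut g -> (Fix e g <-> FixSeq dseq g).
Proof.
  intros Ag; split.
  - intros Fg; split; auto. intros [i0 t]. split; auto. simpl. apply tdrel_RR.
    right; exists (fun u => u), g; split. apply aut_id. split; auto.
  - intros [_ HF]. split; auto. intros pe Hpe.
    destruct Eeq as [Rf _].
    destruct (map (fun v : I + I => match v with inl i => i | inr i => i end) (ffv L pe)) as [|i0 t'] eqn:Et.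
    + assert (Hnil : ffv L pe = nil). { destruct (ffv L pe); auto; discriminate. }
      intros env. rewrite (sat_loc L M pe _ (sumf a a)). apply (Rf a); auto. rewrite Hnil; simpl; tauto.
    + set (t := i0 :: t').
      assert (Ht : forall v, In v (ffv L pe) -> exists k : Sx t, idxS i0 t k = match v with inl i => i | inr i => i end).
      { intros v Hv. assert (Hin : In (match v with inl i => i | inr i => i end) t).
        { unfold t; rewrite <- Et. apply in_map_iff. exists v; auto. }
        destruct (In_nth _ _ i0 Hin) as [n [Hlt Hnth]].
        exists (exist _ n Hlt : Sx t). unfold idxS; simpl. exact Hnth. }
      generalize (proj2 (HF (i0, t))). simpl. intros Hd. apply tdrel_RR in Hd.
      destruct Hd as [Heq|[h [g' [Ah [Fg' Hh]]]]].
      * intros env. rewrite (sat_loc L M pe _ (sumf a a)). apply (Rf a); auto.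
        intros [i|i] Hv; simpl; auto. destruct (Ht _ Hv) as [k Hk]. rewrite <- Hk. apply (Heq k).
      * intros env. rewrite (sat_loc L M pe _ (sumf (fun i => h (g' (a i))) (fun i => h (a i)))).
        apply (tdrel_aut E h _ _ Ah (proj2 Fg')); auto.
        intros [i|i] Hv; simpl; destruct (Ht _ Hv) as [k Hk]; rewrite <- Hk; apply (Hh k).
Qed.

End Main.

Theorem mainTheorem5 (L : language) (M : structure L) (K : Type)
  (HM : monster M K) (e : hyperimaginary M K) :
  normal_h e ->
  exists (J : Type) (d : J -> hyperimaginary M K),
    small K J /\ (forall j, finitary (d j)) /\ hsim M K (Fix e) (FixSeq d).
Proof.
  intros Hn. exists (hI e * list (hI e))%type, (dseq L M K HM e Hn). split; [|split].
  - destruct HM as [Hnat [_ [_ [Hreg _]]]]. apply small_prod; auto. apply (hI_small e). apply small_list; auto. apply (hI_small e).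
  - intros [i0 t]. exists (dseq L M K HM e Hn (i0, t)). split.
    + exists (enum_lt (length t)). intros; apply enum_lt_all.
    + intros c; tauto.
  - intros c; split; intros H g Ag Hg; apply H; auto; apply (Fix_iff L M K HM e Hn g Ag); auto.
Qed.
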